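(* The north pole (resp. south pole) of the shape sphere $M^\ast$, i.e. the geometric center of the hemisphere $M^\ast_+$ of positively oriented shapes (resp. $M^\ast_-$ of negatively oriented shapes), is the shape of the positively (resp. negatively) oriented m-triangle with $I=1$ whose individual moments of inertia equal the dual masses: $I_j=\frac12(1-m_j)$, $j=1,2,3$.
   Context: Masses $m_1,m_2,m_3>0$, $m_1+m_2+m_3=1$; m-triangles $(\mathbf a_1,\mathbf a_2,\mathbf a_3)$, $\mathbf a_i\in\mathbb R^3$, $\sum m_i\mathbf a_i=0$, with $I_j=m_j|\mathbf a_j|^2$ and $I=\sum I_j$. Oriented m-triangles carry a unit normal $\mathbf n$; a nondegenerate one is positively oriented if $(\mathbf a_1,\mathbf a_2,\mathbf n)$ is right-handed. The shape space $M^\ast$ (oriented m-triangles with $I=1$ modulo rotation), with the kinematic metric induced from $\sum m_i|d\mathbf a_i|^2$ via lifts of zero angular momentum, is a round sphere of radius $1/2$, divided by the equator of collinear shapes into the closed hemispheres $M^\ast_\pm$ of positively and negatively oriented shapes. *)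

(* Defs.v *)
From HB Require Import structures.
From mathcomp Require Import all_boot all_order all_algebra.
From mathcomp Require Import all_classical all_reals all_analysis.
Set Implicit Arguments. Unset Strict Implicit. Unset Printing Implicit Defensive.
Import Order.TTheory GRing.Theory Num.Theory.
Local Open Scope ring_scope.
Local Open Scope classical_set_scope.

Section Defs.
Variable R : realType.

Definition dotv (u v : 'rV[R]_3) : R := (u *m v^T) 0 0.

Definition is_mtriangle (m : 'I_3 -> R) (a : 'I_3 -> 'rV[R]_3) : Prop :=
  \sum_(i < 3) m i *: a i = 0.

Definition inertia_j (m : 'I_3 -> R) (a : 'I_3 -> 'rV[R]_3) (j : 'I_3) : R :=
  m j * dotv (a j) (a j).
Definition inertia (m : 'I_3 -> R) (a : 'I_3 -> 'rV[R]_3) : R :=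
  \sum_(j < 3) inertia_j m a j.

Definition oriented_mtriangle m a (n : 'rV[R]_3) : Prop :=
  is_mtriangle m a /\ dotv n n = 1 /\ forall i, dotv n (a i) = 0.

(* collinear: all vertices on a common line (through the center of mass 0) *)
Definition collinear (a : 'I_3 -> 'rV[R]_3) : Prop :=
  exists u : 'rV[R]_3, forall i, exists t : R, a i = t *: u.

Definition frame_det (a : 'I_3 -> 'rV[R]_3) (n : 'rV[R]_3) : R :=
  \det (\matrix_(i < 3, j < 3) (nth 0 [:: a 0; a 1; n] i) 0 j).

Definition pos_oriented a n : Prop := ~ collinear a /\ 0 < frame_det a n.
Definition neg_oriented a n : Prop := ~ collinear a /\ frame_det a n < 0.

Definition rotation (Q : 'M[R]_3) : Prop := Q *m Q^T = 1 /\ \det Q = 1.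

(* Distance in M^* (kinematic metric, quotient by rotations) between the shapes
   of two oriented m-triangles with I = 1: arccos of the maximal mass-weighted
   inner product over rotations (acting on rows by v |-> v *m Q) matching the
   orientation normals. *)
Definition shape_cos m a n b (n' : 'rV[R]_3) : R :=
  sup [set x : R | exists Q, rotation Q /\ n' *m Q = n /\
         x = \sum_(i < 3) m i * dotv (a i) (b i *m Q)].
Definition shape_dist m a n b n' : R := acos (shape_cos m a n b n').

(* the shape of (a,n) is the center (pole) of the closed hemisphere M^*_+
   (resp. M^*_-): it lies in that hemisphere and is at distance pi/4
   (a quarter great circle of the sphere of radius 1/2) from every point
   of the equator of collinear shapes. *)
Definition is_north_pole m a n : Prop :=
  oriented_mtriangle m a n /\ inertia m a = 1 /\ (pos_oriented a n \/ collinear a) /\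
  forall b n', oriented_mtriangle m b n' -> inertia m b = 1 -> collinear b ->
    shape_dist m a n b n' = pi / 4.
Definition is_south_pole m a n : Prop :=
  oriented_mtriangle m a n /\ inertia m a = 1 /\ (neg_oriented a n \/ collinear a) /\
  forall b n', oriented_mtriangle m b n' -> inertia m b = 1 -> collinear b ->
    shape_dist m a n b n' = pi / 4.

End Defs.

(* Main.v *)
Require Import Defs.
From HB Require Import structures.
From mathcomp Require Import all_boot all_order all_algebra.
From mathcomp Require Import all_classical all_reals all_analysis.
From mathcomp Require Import ring lra.
Import Order.TTheory GRing.Theory Num.Theory.
Local Open Scope ring_scope.
Local Open Scope classical_set_scope.

Section Basics.
Variable R : realType.
Implicit Types (u v : 'rV[R]_3).

Lemma sum3 (V : nmodType) (F : 'I_3 -> V) : \sum_(i < 3) F i = F 0 + F 1 + F 2.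
Proof.
rewrite !big_ord_recr big_ord0 /= add0r.
by congr (_ + _ + _); congr F; apply: val_inj.
Qed.

Lemma ord3P (j : 'I_3) : j = 0 \/ j = 1 \/ j = 2.
Proof.
case: j => [[|[|[|?]]] hj] //.
- by left; apply: val_inj.
- by right; left; apply: val_inj.
- by right; right; apply: val_inj.
Qed.

Lemma det3 (A : 'M[R]_3) : \det A =
  A 0 0 * (A 1 1 * A 2 2 - A 1 2 * A 2 1) - A 0 1 * (A 1 0 * A 2 2 - A 1 2 * A 2 0)
  + A 0 2 * (A 1 0 * A 2 1 - A 1 1 * A 2 0).
Proof.
pose f (i j : nat) := A (inord i) (inord j).
have hA : forall i j : 'I_3, A i j = f i j by move=> i j; rewrite /f !inord_val.
rewrite (expand_det_row _ 0) !big_ord_recr big_ord0 /= /cofactor.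
rewrite !(expand_det_row _ 0) !big_ord_recr !big_ord0 /= /cofactor.
rewrite !det_mx11 !mxE !hA /=.
rewrite /bump /=.
rewrite !expr0 ?expr1 /=.
have e2 : (-1 : R) ^+ 2 = 1 by rewrite sqrrN expr1n.
rewrite e2. ring.
Qed.

Lemma dotvE u v : dotv u v = u 0 0 * v 0 0 + u 0 1 * v 0 1 + u 0 2 * v 0 2.
Proof. by rewrite /dotv !mxE sum3 !mxE. Qed.

Lemma dotvC u v : dotv u v = dotv v u.
Proof. rewrite !dotvE; ring. Qed.

Definition row3 (x y z : R) : 'rV[R]_3 := \row_(j < 3) nth 0 [:: x; y; z] j.

Lemma row3E x y z : (row3 x y z) 0 0 = x /\ (row3 x y z) 0 1 = y /\ (row3 x y z) 0 2 = z.
Proof. by rewrite !mxE. Qed.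

Definition frameM (p q r : 'rV[R]_3) : 'M[R]_3 :=
  \matrix_(i < 3, j < 3) (nth 0 [:: p; q; r] i) 0 j.

Lemma frameME p q r i j :
  frameM p q r i j = (nth 0 [:: p; q; r] i) 0 j.
Proof. by rewrite !mxE. Qed.

Lemma frame_det_E (a : 'I_3 -> 'rV[R]_3) n : frame_det a n =
  a 0 0 0 * (a 1 0 1 * n 0 2 - a 1 0 2 * n 0 1)
  - a 0 0 1 * (a 1 0 0 * n 0 2 - a 1 0 2 * n 0 0)
  + a 0 0 2 * (a 1 0 0 * n 0 1 - a 1 0 1 * n 0 0).
Proof. by rewrite /frame_det det3 !mxE /=. Qed.


Definition cross (p q : 'rV[R]_3) : 'rV[R]_3 :=
  row3 (p 0 1 * q 0 2 - p 0 2 * q 0 1) (p 0 2 * q 0 0 - p 0 0 * q 0 2)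
       (p 0 0 * q 0 1 - p 0 1 * q 0 0).

Definition FF p q := frameM p q (cross p q).

Lemma mulmx_tr_dot (A B : 'M[R]_3) i j : (A *m B^T) i j = dotv (row i A) (row j B).
Proof. by rewrite /dotv !mxE; apply: eq_bigr => k _; rewrite !mxE. Qed.

Lemma row_frame p q r i : row i (frameM p q r) = nth 0 [:: p; q; r] i.
Proof. by apply/rowP => k; rewrite !mxE. Qed.

Lemma dot_cross_l p q : dotv p (cross p q) = 0.
Proof. rewrite !dotvE !mxE /=; ring. Qed.
Lemma dot_cross_r p q : dotv q (cross p q) = 0.
Proof. rewrite !dotvE !mxE /=; ring. Qed.
Lemma dot_cross p q : dotv (cross p q) (cross p q) = dotv p p * dotv q q - dotv p q ^+ 2.
Proof. rewrite !dotvE !mxE /=; ring. Qed.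

Lemma FF_orth p q : dotv p p = 1 -> dotv q q = 1 -> dotv p q = 0 ->
  FF p q *m (FF p q)^T = 1%:M.
Proof.
move=> hp hq hpq; apply/matrixP => i j; rewrite mulmx_tr_dot !row_frame !mxE.
have hqp : dotv q p = 0 by rewrite dotvC.
have hcp : dotv (cross p q) p = 0 by rewrite dotvC dot_cross_l.
have hcq : dotv (cross p q) q = 0 by rewrite dotvC dot_cross_r.
have hcc : dotv (cross p q) (cross p q) = 1.
  by rewrite dot_cross hp hq hpq; rewrite expr0n /= subr0 mulr1.
by case: (ord3P i) => [->|[->|->]]; case: (ord3P j) => [->|[->|->]];
  rewrite /= ?dot_cross_l ?dot_cross_r.
Qed.

Lemma FF_det p q : \det (FF p q) = dotv (cross p q) (cross p q).
Proof. rewrite det3 !frameME /= !dotvE !mxE /=; ring. Qed.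

Lemma mul_FFtr u p q : u *m (FF p q)^T = row3 (dotv u p) (dotv u q) (dotv u (cross p q)).
Proof.
apply/rowP => k; rewrite !mxE sum3 !mxE.
by case: (ord3P k) => [->|[->|->]]; rewrite /= !dotvE ?mxE /=.
Qed.

Lemma mul_row3_FF x y z p q :
  row3 x y z *m FF p q = x *: p + y *: q + z *: cross p q.
Proof.
by apply/rowP => k; rewrite !mxE sum3 !mxE /=.
Qed.

Lemma rot_exists p q p' q' :
  dotv p p = 1 -> dotv q q = 1 -> dotv p q = 0 ->
  dotv p' p' = 1 -> dotv q' q' = 1 -> dotv p' q' = 0 ->
  exists Q : 'M[R]_3, rotation Q /\ p *m Q = p' /\ q *m Q = q'.
Proof.
move=> hp hq hpq hp' hq' hpq'.
exists ((FF p q)^T *m FF p' q').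
have hO := FF_orth _ _ hp hq hpq.
have hO' := FF_orth _ _ hp' hq' hpq'.
have hqp : dotv q p = 0 by rewrite dotvC.
split; [split|split].
- rewrite trmx_mul trmxK !mulmxA -(mulmxA _ (FF p' q')) hO' mulmx1.
  exact: mulmx1C.
- rewrite det_mulmx det_tr !FF_det !dot_cross hp hq hpq hp' hq' hpq'.
  by rewrite expr0n /= subr0 !mulr1.
- rewrite mulmxA mul_FFtr hp hpq dot_cross_l mul_row3_FF.
  by rewrite scale1r !scale0r !addr0.
- rewrite mulmxA mul_FFtr hq hqp dot_cross_r mul_row3_FF.
  by rewrite scale1r !scale0r addr0 add0r.
Qed.

Lemma dot_rot Q u v : rotation Q -> dotv (u *m Q) (v *m Q) = dotv u v.
Proof.
case=> hQ _; rewrite /dotv trmx_mul !mulmxA -(mulmxA u Q) hQ mulmx1.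
by [].
Qed.

End Basics.
Arguments rot_exists {R p q p' q'}.

Section Main.
Variable R : realType.
Variable m : 'I_3 -> R.
Hypothesis hpos : forall i, 0 < m i.
Hypothesis hsum : \sum_(i < 3) m i = 1.

Implicit Types (u v : 'rV[R]_3).

Definition wv (a : 'I_3 -> 'rV[R]_3) (t : 'I_3 -> R) : 'rV[R]_3 :=
  (m 0 * t 0) *: a 0 + (m 1 * t 1) *: a 1 + (m 2 * t 2) *: a 2.

Lemma dotvZl c u v : dotv (c *: u) v = c * dotv u v.
Proof. rewrite !dotvE !mxE; ring. Qed.
Lemma dotvZr c u v : dotv u (c *: v) = c * dotv u v.
Proof. rewrite !dotvE !mxE; ring. Qed.
Lemma dotv_ge0 u : 0 <= dotv u u.
Proof. rewrite dotvE; nra. Qed.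
Lemma dotv_lin3r (x y0 y1 y2 : 'rV[R]_3) (c0 c1 c2 : R) :
  dotv x (c0 *: y0 + c1 *: y1 + c2 *: y2) = c0 * dotv x y0 + c1 * dotv x y1 + c2 * dotv x y2.
Proof. rewrite !dotvE !mxE; ring. Qed.

Lemma cs_dot w v : dotv v v = 1 -> dotv w v <= Num.sqrt (dotv w w).
Proof.
move=> hv.
have h2 : dotv w v ^+ 2 <= dotv w w.
  have := dotv_ge0 (cross _ w v); rewrite dot_cross hv mulr1 subr_ge0.
  by [].
apply: (le_trans (ler_norm _)); rewrite -sqrtr_sqr; exact: ler_wsqrtr.
Qed.

Lemma cs_dot0 w v : dotv w w = 0 -> dotv w v = 0.
Proof.
move=> hw.
have := dotv_ge0 (cross _ w v); rewrite dot_cross hw mul0r sub0r oppr_ge0 => h.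
have h' : dotv w v ^+ 2 = 0 by apply: le_anti; rewrite h sqr_ge0.
by apply/eqP; rewrite -sqrf_eq0 h'.
Qed.

Lemma unit_perp a n : oriented_mtriangle m a n -> inertia m a = 1 ->
  exists v, dotv v v = 1 /\ dotv n v = 0.
Proof.
move=> [ht [hn hna]] hI.
suff [k hk] : exists k, 0 < dotv (a k) (a k).
  exists ((Num.sqrt (dotv (a k) (a k)))^-1 *: a k); split.
    rewrite dotvZl dotvZr mulrA -expr2 exprVn sqr_sqrtr ?ltW //.
    by rewrite mulVf // gt_eqF.
  by rewrite dotvZr hna mulr0.
move: hI; rewrite /inertia sum3 /inertia_j => hI.
have g0 := dotv_ge0 (a 0); have g1 := dotv_ge0 (a 1); have g2 := dotv_ge0 (a 2).
case: (boolP (0 < dotv (a 0) (a 0))) => [h|h]; first by exists 0.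
case: (boolP (0 < dotv (a 1) (a 1))) => [h1|h1]; first by exists 1.
case: (boolP (0 < dotv (a 2) (a 2))) => [h2|h2]; first by exists 2.
move: h h1 h2; rewrite -!leNgt => h h1 h2.
have e0 : dotv (a 0) (a 0) = 0 by apply: le_anti; rewrite h g0.
have e1 : dotv (a 1) (a 1) = 0 by apply: le_anti; rewrite h1 g1.
have e2 : dotv (a 2) (a 2) = 0 by apply: le_anti; rewrite h2 g2.
move: hI; rewrite e0 e1 e2 !mulr0 !addr0 => /eqP; rewrite eq_sym oner_eq0 //.
Qed.

Lemma shape_cos_col a n b n' t u :
  oriented_mtriangle m a n -> inertia m a = 1 ->
  dotv n' n' = 1 -> dotv u u = 1 -> dotv n' u = 0 ->
  (forall i, b i = t i *: u) ->
  shape_cos m a n b n' = Num.sqrt (dotv (wv a t) (wv a t)).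
Proof.
move=> ho hI hn' hu hn'u hb.
have [ht [hn hna]] := ho.
set w := wv a t.
set S := [set x : R | exists Q, rotation Q /\ n' *m Q = n /\
         x = \sum_(i < 3) m i * dotv (a i) (b i *m Q)].
have hval : forall Q, \sum_(i < 3) m i * dotv (a i) (b i *m Q) = dotv w (u *m Q).
  move=> Q; rewrite sum3 !hb -!scalemxAl /w /wv.
  rewrite !dotvE !mxE; ring.
have hnw : dotv n w = 0.
  by rewrite /w /wv dotv_lin3r !hna !mulr0 !addr0.
have hub : ubound S (Num.sqrt (dotv w w)).
  move=> x [Q [hQ [_ ->]]]; rewrite hval; apply: cs_dot.
  by rewrite dot_rot.
have hmem : S (Num.sqrt (dotv w w)).
  have hw0 := dotv_ge0 w.
  case: (boolP (0 < dotv w w)) => hw.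
    set v := (Num.sqrt (dotv w w))^-1 *: w.
    have hv : dotv v v = 1.
      rewrite dotvZl dotvZr mulrA -expr2 exprVn sqr_sqrtr //.
      by rewrite mulVf // gt_eqF.
    have hnv : dotv n v = 0 by rewrite dotvZr hnw mulr0.
    have [Q [hQ [hQ1 hQ2]]] := rot_exists hn' hu hn'u hn hv hnv.
    exists Q; split => //; split => //; rewrite hval hQ2 dotvZr.
    have hs : 0 < Num.sqrt (dotv w w) by rewrite sqrtr_gt0.
    have e : dotv w w = Num.sqrt (dotv w w) * Num.sqrt (dotv w w).
      by rewrite -expr2 sqr_sqrtr.
    set s := Num.sqrt (dotv w w) in hs e *.
    by rewrite [X in _ = _ * X]e mulrA mulVf ?mul1r // gt_eqF.
  have hw' : dotv w w = 0 by apply: le_anti; rewrite hw0 andbT leNgt hw.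
  have [v [hv hnv]] := unit_perp _ _ ho hI.
  have [Q [hQ [hQ1 hQ2]]] := rot_exists hn' hu hn'u hn hv hnv.
  exists Q; split => //; split => //; rewrite hval hQ2 hw' sqrtr0.
  by rewrite cs_dot0.
apply: le_anti; rewrite /shape_cos -/S; apply/andP; split.
  by apply: ge_sup => //; exists (Num.sqrt (dotv w w)).
apply: sup_upper_bound => //; split; first by exists (Num.sqrt (dotv w w)).
by exists (Num.sqrt (dotv w w)).
Qed.

End Main.
Arguments wv {R} m a t.
Arguments dotv_ge0 {R} u.
Arguments dotvZl {R} c u v.
Arguments dotvZr {R} c u v.
Arguments dotv_lin3r {R} x y0 y1 y2 c0 c1 c2.
Arguments cs_dot {R} w v.
Arguments cs_dot0 {R} w v.
Arguments unit_perp {R} m a n.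
Arguments shape_cos_col {R} m a n b n' t u.

Section Main2.
Variable R : realType.
Variable m : 'I_3 -> R.
Hypothesis hpos : forall i, 0 < m i.
Hypothesis hsum : \sum_(i < 3) m i = 1.

Definition S1 (t : 'I_3 -> R) := m 0 * t 0 + m 1 * t 1 + m 2 * t 2.
Definition S2 (t : 'I_3 -> R) := m 0 * t 0 ^+ 2 + m 1 * t 1 ^+ 2 + m 2 * t 2 ^+ 2.

Lemma col_normal (b : 'I_3 -> 'rV[R]_3) n' :
  oriented_mtriangle m b n' -> inertia m b = 1 -> collinear b ->
  exists t u, [/\ dotv u u = 1, dotv n' u = 0, (forall i, b i = t i *: u),
     S1 t = 0 & S2 t = 1].
Proof.
move=> [hm [hn' hnb]] hI [u0 hu0].
have [t ht] := choice hu0.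
set c := dotv u0 u0.
have hIc : S2 t * c = 1.
  move: hI; rewrite /inertia sum3 /inertia_j !ht !dotvZl !dotvZr /S2 -/c => <-.
  by rewrite /c; ring.
have hc0 : 0 <= c := dotv_ge0 u0.
have hc : 0 < c.
  rewrite lt_neqAle hc0 andbT; apply/negP => /eqP hc'.
  by move: hIc; rewrite -hc' mulr0 => /eqP; rewrite eq_sym oner_eq0.
set r := Num.sqrt c.
have hr : 0 < r by rewrite sqrtr_gt0.
have hr2 : r ^+ 2 = c by rewrite sqr_sqrtr.
have hr0 : r != 0 by rewrite gt_eqF.
have hd : dotv n' u0 = 0.
  have h0 := hnb 0; have h1 := hnb 1; have h2 := hnb 2.
  rewrite !ht !dotvZr in h0 h1 h2.
  case: (eqVneq (dotv n' u0) 0) => // hd.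
  have e0 : t 0 = 0 by apply/eqP; move: h0 => /eqP; rewrite mulf_eq0 (negbTE hd) orbF.
  have e1 : t 1 = 0 by apply/eqP; move: h1 => /eqP; rewrite mulf_eq0 (negbTE hd) orbF.
  have e2 : t 2 = 0 by apply/eqP; move: h2 => /eqP; rewrite mulf_eq0 (negbTE hd) orbF.
  move: hIc; rewrite /S2 e0 e1 e2 expr0n /= !mulr0 !addr0 mul0r => /eqP.
  by rewrite eq_sym oner_eq0.
have hs1 : S1 t = 0.
  have : dotv u0 (m 0 *: b 0 + m 1 *: b 1 + m 2 *: b 2) = 0.
    move: hm; rewrite /is_mtriangle sum3 => ->.
    by rewrite dotvE !mxE; ring.
  rewrite dotv_lin3r !ht !dotvZr -/c => h.
  have : S1 t * c = 0 by rewrite -h /S1; ring.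
  by move/eqP; rewrite mulf_eq0 (gt_eqF hc) orbF => /eqP.
exists (fun i => t i * r), (r^-1 *: u0); split.
- by rewrite dotvZl dotvZr -/c mulrA -expr2 exprVn hr2 mulVf // gt_eqF.
- by rewrite dotvZr hd mulr0.
- by move=> i; rewrite ht scalerA mulfK.
- have -> : S1 (fun i => t i * r) = S1 t * r by rewrite /S1; ring.
  by rewrite hs1 mul0r.
- rewrite /S2 !exprMn hr2 -hIc /S2; ring.
Qed.

Lemma gram_rel a n i : oriented_mtriangle m a n ->
  m 0 * dotv (a i) (a 0) + m 1 * dotv (a i) (a 1) + m 2 * dotv (a i) (a 2) = 0.
Proof.
move=> [hm _]; rewrite -dotv_lin3r; move: hm; rewrite /is_mtriangle sum3 => ->.
by rewrite dotvE !mxE; ring.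
Qed.

Lemma wv_norm (a : 'I_3 -> 'rV[R]_3) t : dotv (wv m a t) (wv m a t) =
  let c0 := m 0 * t 0 in let c1 := m 1 * t 1 in let c2 := m 2 * t 2 in
  c0 * c0 * dotv (a 0) (a 0) + c1 * c1 * dotv (a 1) (a 1) + c2 * c2 * dotv (a 2) (a 2)
  + 2 * c0 * c1 * dotv (a 0) (a 1) + 2 * c0 * c2 * dotv (a 0) (a 2)
  + 2 * c1 * c2 * dotv (a 1) (a 2).
Proof. rewrite /wv !dotvE !mxE /=; ring. Qed.

Lemma cs_wv (a : 'I_3 -> 'rV[R]_3) t :
  dotv (wv m a t) (wv m a t) <= S2 t * inertia m a.
Proof.
rewrite -subr_ge0.
have -> : S2 t * inertia m a - dotv (wv m a t) (wv m a t) =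
  m 0 * m 1 * dotv (t 0 *: a 1 - t 1 *: a 0) (t 0 *: a 1 - t 1 *: a 0)
  + m 0 * m 2 * dotv (t 0 *: a 2 - t 2 *: a 0) (t 0 *: a 2 - t 2 *: a 0)
  + m 1 * m 2 * dotv (t 1 *: a 2 - t 2 *: a 1) (t 1 *: a 2 - t 2 *: a 1).
  rewrite /S2 /inertia sum3 /inertia_j /wv !dotvE !mxE; ring.
by rewrite !addr_ge0 // mulr_ge0 ?dotv_ge0 // mulr_ge0 // ltW.
Qed.

Lemma cos_pi4 : cos (pi / 4 : R) = Num.sqrt (1 / 2).
Proof.
have hpi := @pi_gt0 R.
have hpos4 : 0 < cos (pi / 4 : R).
  apply: cos_gt0_pihalf; apply/andP; split.
    by rewrite (lt_le_trans _ (ltW (divr_gt0 hpi _))) // ?oppr_lt0 ?divr_gt0.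
  by rewrite ltr_pM2l // ltf_pV2 // ?ltr_nat // posrE.
have h2 : cos (pi / 4 : R) ^+ 2 = 1 / 2.
  have := @cos_pihalf R.
  have -> : (pi / 2 : R) = pi / 4 + pi / 4 by field.
  rewrite cosD -!expr2 sin2cos2 => h.
  by apply: (@mulfI _ 2); rewrite ?pnatr_eq0 //; lra.
by rewrite -h2 sqrtr_sqr ger0_norm // ltW.
Qed.

Lemma acos_pi4 : acos (Num.sqrt (1 / 2) : R) = pi / 4.
Proof.
rewrite -cos_pi4 cosK // in_itv /= divr_ge0 ?pi_ge0 //=.
rewrite ler_pdivrMr // ler_peMr ?pi_ge0 //.
lra.
Qed.

End Main2.
Arguments S1 {R} m t.
Arguments S2 {R} m t.
Arguments col_normal {R} m b n'.
Arguments gram_rel {R} m a n i.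
Arguments wv_norm {R} m a t.
Arguments cs_wv {R} m hpos a t.
Arguments cos_pi4 {R}.
Arguments acos_pi4 {R}.

Section Main3.
Variable R : realType.
Variable m : 'I_3 -> R.
Hypothesis hpos : forall i, 0 < m i.
Hypothesis hsum : \sum_(i < 3) m i = 1.

Lemma hs3 : m 0 + m 1 + m 2 = 1.
Proof. by rewrite -sum3. Qed.

Lemma pole_suff (a : 'I_3 -> 'rV[R]_3) n :
  oriented_mtriangle m a n -> inertia m a = 1 ->
  (forall j, inertia_j m a j = (1 - m j) / 2) ->
  forall b n', oriented_mtriangle m b n' -> inertia m b = 1 -> collinear b ->
    shape_dist m a n b n' = pi / 4.
Proof.
move=> ho hI hIj b n' hob hIb hcb.
have [t [u [hu hn'u hb hs1 hs2]]] := col_normal m b n' hob hIb hcb.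
have hn' : dotv n' n' = 1 := hob.2.1.
rewrite /shape_dist (shape_cos_col m a n b n' t u ho hI hn' hu hn'u hb).
suff -> : dotv (wv m a t) (wv m a t) = 1 / 2 by exact: acos_pi4.
rewrite wv_norm /=.
have hs := hs3.
have hd0 := hIj 0; have hd1 := hIj 1; have hd2 := hIj 2.
rewrite /inertia_j in hd0 hd1 hd2.
have L0 := gram_rel m a n 0 ho.
have L1 := gram_rel m a n 1 ho.
have L2 := gram_rel m a n 2 ho.
rewrite (dotvC _ (a 1) (a 0)) in L1.
rewrite (dotvC _ (a 2) (a 0)) (dotvC _ (a 2) (a 1)) in L2.
set G00 := dotv (a 0) (a 0) in hd0 L0 *.
set G11 := dotv (a 1) (a 1) in hd1 L1 *.
set G22 := dotv (a 2) (a 2) in hd2 L2 *.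
set G01 := dotv (a 0) (a 1) in L0 L1 *.
set G02 := dotv (a 0) (a 2) in L0 L2 *.
set G12 := dotv (a 1) (a 2) in L1 L2 *.
have m0 := hpos 0; have m1 := hpos 1; have m2 := hpos 2.
have e01 : G01 = - (1/2).
  have E : 2 * m 0 * m 1 * (G01 + 1/2) =
    m 0 * (m 0 * G00 + m 1 * G01 + m 2 * G02) + m 1 * (m 0 * G01 + m 1 * G11 + m 2 * G12)
    - m 2 * (m 0 * G02 + m 1 * G12 + m 2 * G22)
    - m 0 * (m 0 * G00 - (1 - m 0) / 2) - m 1 * (m 1 * G11 - (1 - m 1) / 2)
    + m 2 * (m 2 * G22 - (1 - m 2) / 2) + (m 0 + m 1 - m 2) * (m 0 + m 1 + m 2 - 1) / 2.
    by field.
  rewrite L0 L1 L2 hd0 hd1 hd2 hs in E.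
  have {}E : 2 * m 0 * m 1 * (G01 + 1/2) = 0 by rewrite E; ring.
  have hne : 2 * m 0 * m 1 != 0 by rewrite !mulf_neq0 // ?gt_eqF // pnatr_eq0.
  move/eqP: E; rewrite mulf_eq0 (negbTE hne) /= => /eqP; lra.
have e02 : G02 = - (1/2).
  have E : 2 * m 0 * m 2 * (G02 + 1/2) =
    m 0 * (m 0 * G00 + m 1 * G01 + m 2 * G02) + m 2 * (m 0 * G02 + m 1 * G12 + m 2 * G22) - m 1 * (m 0 * G01 + m 1 * G11 + m 2 * G12)
    - m 0 * (m 0 * G00 - (1 - m 0) / 2) - m 2 * (m 2 * G22 - (1 - m 2) / 2)
    + m 1 * (m 1 * G11 - (1 - m 1) / 2) + (m 0 + m 2 - m 1) * (m 0 + m 1 + m 2 - 1) / 2.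
    by field.
  rewrite L0 L1 L2 hd0 hd1 hd2 hs in E.
  have {}E : 2 * m 0 * m 2 * (G02 + 1/2) = 0 by rewrite E; ring.
  have hne : 2 * m 0 * m 2 != 0 by rewrite !mulf_neq0 // ?gt_eqF // pnatr_eq0.
  move/eqP: E; rewrite mulf_eq0 (negbTE hne) /= => /eqP; lra.
have e12 : G12 = - (1/2).
  have E : 2 * m 1 * m 2 * (G12 + 1/2) =
    m 1 * (m 0 * G01 + m 1 * G11 + m 2 * G12) + m 2 * (m 0 * G02 + m 1 * G12 + m 2 * G22) - m 0 * (m 0 * G00 + m 1 * G01 + m 2 * G02)
    - m 1 * (m 1 * G11 - (1 - m 1) / 2) - m 2 * (m 2 * G22 - (1 - m 2) / 2)
    + m 0 * (m 0 * G00 - (1 - m 0) / 2) + (m 1 + m 2 - m 0) * (m 0 + m 1 + m 2 - 1) / 2.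
    by field.
  rewrite L0 L1 L2 hd0 hd1 hd2 hs in E.
  have {}E : 2 * m 1 * m 2 * (G12 + 1/2) = 0 by rewrite E; ring.
  have hne : 2 * m 1 * m 2 != 0 by rewrite !mulf_neq0 // ?gt_eqF // pnatr_eq0.
  move/eqP: E; rewrite mulf_eq0 (negbTE hne) /= => /eqP; lra.
have g00 : G00 = (1 - m 0) / 2 / m 0 by rewrite -hd0 mulrAC mulfV ?mul1r // gt_eqF.
have g11 : G11 = (1 - m 1) / 2 / m 1 by rewrite -hd1 mulrAC mulfV ?mul1r // gt_eqF.
have g22 : G22 = (1 - m 2) / 2 / m 2 by rewrite -hd2 mulrAC mulfV ?mul1r // gt_eqF.
have F : (S2 m t - S1 m t ^+ 2) / 2 = 1 / 2 by rewrite hs1 hs2 expr0n /= subr0.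
rewrite -F /S1 /S2 g00 g11 g22 e01 e02 e12.
by field; rewrite !gt_eqF.
Qed.
End Main3.

Section Main4.
Variable R : realType.
Variable m : 'I_3 -> R.
Hypothesis hpos : forall i, 0 < m i.
Hypothesis hsum : \sum_(i < 3) m i = 1.

Lemma key_nec (a : 'I_3 -> 'rV[R]_3) n : oriented_mtriangle m a n -> inertia m a = 1 ->
  (forall b n', oriented_mtriangle m b n' -> inertia m b = 1 -> collinear b ->
    shape_dist m a n b n' = pi / 4) ->
  forall t, S1 m t = 0 -> S2 m t = 1 -> dotv (wv m a t) (wv m a t) = 1 / 2.
Proof.
move=> ho hI H t hs1 hs2.
pose e1 : 'rV[R]_3 := row3 _ 1 0 0.
pose e3 : 'rV[R]_3 := row3 _ 0 0 1.
have he1 : dotv e1 e1 = 1 by rewrite dotvE !mxE /=; ring.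
have he3 : dotv e3 e3 = 1 by rewrite dotvE !mxE /=; ring.
have he31 : dotv e3 e1 = 0 by rewrite dotvE !mxE /=; ring.
pose b := fun i => t i *: e1.
have hob : oriented_mtriangle m b e3.
  split; [|split] => //.
  - rewrite /is_mtriangle sum3 /b !scalerA -!scalerDl.
    have -> : m 0 * t 0 + m 1 * t 1 + m 2 * t 2 = 0 by exact: hs1.
    by rewrite scale0r.
  - by move=> i; rewrite /b dotvZr he31 mulr0.
have hIb : inertia m b = 1.
  rewrite -hs2 /inertia sum3 /inertia_j /b !dotvZl !dotvZr he1 /S2; ring.
have hcb : collinear b by exists e1 => i; exists (t i).
have := H b e3 hob hIb hcb.
rewrite /shape_dist (shape_cos_col m a n b e3 t e1 ho hI he3 he1 he31 (fun i => erefl)).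
set q := dotv (wv m a t) (wv m a t).
have hq0 : 0 <= q := dotv_ge0 _.
have hq1 : q <= 1 by have := cs_wv m hpos a t; rewrite hs2 hI mulr1.
have hsq : -1 <= Num.sqrt q <= 1.
  apply/andP; split.
    by apply: le_trans (sqrtr_ge0 q); lra.
  by rewrite -sqrtr1 ler_wsqrtr.
move=> hac.
have e : Num.sqrt q = Num.sqrt (1/2) by rewrite -cos_pi4 -hac acosK // in_itv /= hsq.
have h12 : (0:R) <= 1/2 by lra.
by rewrite -(sqr_sqrtr hq0) -(sqr_sqrtr h12) e.
Qed.

Lemma key_nec2 (a : 'I_3 -> 'rV[R]_3) n : oriented_mtriangle m a n -> inertia m a = 1 ->
  (forall b n', oriented_mtriangle m b n' -> inertia m b = 1 -> collinear b ->
    shape_dist m a n b n' = pi / 4) ->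
  forall t, S1 m t = 0 -> 0 < S2 m t -> dotv (wv m a t) (wv m a t) = S2 m t / 2.
Proof.
move=> ho hI H t hs1 hs2.
set r := Num.sqrt (S2 m t).
have hr : 0 < r by rewrite sqrtr_gt0.
have hr0 : r != 0 by rewrite gt_eqF.
have hr2 : r ^+ 2 = S2 m t by rewrite sqr_sqrtr // ltW.
pose t2 := fun i => t i / r.
have h1 : S1 m t2 = 0.
  have -> : S1 m t2 = S1 m t / r by rewrite /S1 /t2; ring.
  by rewrite hs1 mul0r.
have h2 : S2 m t2 = 1.
  have -> : S2 m t2 = S2 m t / r ^+ 2 by rewrite /S2 /t2; field.
  by rewrite hr2 divff // -hr2 expf_neq0.
have hw : wv m a t2 = r^-1 *: wv m a t.
  by apply/rowP => k; rewrite /wv /t2 !mxE; ring.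
have := key_nec _ _ ho hI H _ h1 h2; rewrite hw dotvZl dotvZr => h.
rewrite -hr2.
transitivity (r ^+ 2 * (r^-1 * (r^-1 * dotv (wv m a t) (wv m a t)))).
  by field.
by rewrite h; ring.
Qed.


Lemma mlt1 j : m j < 1.
Proof.
have := @hs3 R m hsum; have := hpos 0; have := hpos 1; have := hpos 2.
by case: (ord3P j) => [->|[->|->]]; lra.
Qed.

Lemma Ij_from (a : 'I_3 -> 'rV[R]_3) j t :
  (forall t, S1 m t = 0 -> 0 < S2 m t -> dotv (wv m a t) (wv m a t) = S2 m t / 2) ->
  S1 m t = 0 -> S2 m t = m j * (1 - m j) -> wv m a t = m j *: a j ->
  inertia_j m a j = (1 - m j) / 2.
Proof.
move=> Hq h1 h2 hw.
have mj := hpos j; have hl := mlt1 j.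
have hS : 0 < S2 m t by rewrite h2 mulr_gt0 // subr_gt0.
have := Hq t h1 hS; rewrite hw dotvZl dotvZr h2 => h.
have hne : m j != 0 by rewrite gt_eqF.
apply: (mulfI hne); rewrite /inertia_j h; ring.
Qed.

Lemma pole_nec (a : 'I_3 -> 'rV[R]_3) n : oriented_mtriangle m a n -> inertia m a = 1 ->
  (forall b n', oriented_mtriangle m b n' -> inertia m b = 1 -> collinear b ->
    shape_dist m a n b n' = pi / 4) ->
  ~ collinear a /\ forall j, inertia_j m a j = (1 - m j) / 2.
Proof.
move=> ho hI H.
have Hq := key_nec2 _ _ ho hI H.
have hs := @hs3 R m hsum.
have e2 : m 2 = 1 - m 0 - m 1 by lra.
have [hm _] := ho.
move: hm; rewrite /is_mtriangle sum3 => hm.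
have hk : forall k, m 0 * a 0 0 k + m 1 * a 1 0 k + m 2 * a 2 0 k = 0.
  by move=> k; have := congr1 (fun v : 'rV[R]_3 => v 0 k) hm; rewrite !mxE.
split.
  move=> hc; have [t [u [hu hnu ha hs1 hs2]]] := col_normal m a n ho hI hc.
  have := H a n ho hI hc.
  rewrite /shape_dist (shape_cos_col m a n a n t u ho hI ho.2.1 hu hnu ha).
  have -> : wv m a t = u.
    rewrite /wv !ha !scalerA -!scalerDl.
    have -> : m 0 * t 0 * t 0 + m 1 * t 1 * t 1 + m 2 * t 2 * t 2 = 1.
      by rewrite -hs2 /S2; ring.
    by rewrite scale1r.
  rewrite hu sqrtr1 acos1 => h.
  have := @pi_gt0 R; lra.
move=> j; case: (ord3P j) => [->|[->|->]].
- apply: (Ij_from a _ (fun i => nth 0 [:: 1 - m 0; - m 0; - m 0] i) Hq).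
  + by rewrite /S1 /= e2; ring.
  + by rewrite /S2 /= e2; ring.
  + apply/rowP => k; rewrite /wv !mxE /=.
    transitivity (m 0 * a 0 0 k - m 0 * (m 0 * a 0 0 k + m 1 * a 1 0 k + m 2 * a 2 0 k)).
      by ring.
    by rewrite hk mulr0 subr0.
- apply: (Ij_from a _ (fun i => nth 0 [:: - m 1; 1 - m 1; - m 1] i) Hq).
  + by rewrite /S1 /= e2; ring.
  + by rewrite /S2 /= e2; ring.
  + apply/rowP => k; rewrite /wv !mxE /=.
    transitivity (m 1 * a 1 0 k - m 1 * (m 0 * a 0 0 k + m 1 * a 1 0 k + m 2 * a 2 0 k)).
      by ring.
    by rewrite hk mulr0 subr0.
- apply: (Ij_from a _ (fun i => nth 0 [:: - m 2; - m 2; 1 - m 2] i) Hq).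
  + by rewrite /S1 /= e2; ring.
  + by rewrite /S2 /= e2; ring.
  + apply/rowP => k; rewrite /wv !mxE /=.
    transitivity (m 2 * a 2 0 k - m 2 * (m 0 * a 0 0 k + m 1 * a 1 0 k + m 2 * a 2 0 k)).
      by ring.
    by rewrite hk mulr0 subr0.
Qed.

End Main4.

Lemma col_det0 (R : realType) (a : 'I_3 -> 'rV[R]_3) n : collinear a -> frame_det a n = 0.
Proof.
move=> [u hu]; have [t0 h0] := hu 0; have [t1 h1] := hu 1.
rewrite frame_det_E h0 h1 !mxE; ring.
Qed.

Section Exist.
Variable R : realType.
Variable m : 'I_3 -> R.
Hypothesis hpos : forall i, 0 < m i.
Hypothesis hsum : \sum_(i < 3) m i = 1.

Lemma exists_pole (s : R) : s ^+ 2 = 1 ->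
  exists (a : 'I_3 -> 'rV[R]_3) (n : 'rV[R]_3),
     [/\ oriented_mtriangle m a n, inertia m a = 1,
         (exists c, 0 < c /\ frame_det a n = s * c) &
     forall j, inertia_j m a j = (1 - m j) / 2].
Proof.
move=> hs2.
have hs := @hs3 R m hsum.
have m0 := hpos 0; have m1 := hpos 1; have m2 := hpos 2.
have e2 : m 2 = 1 - m 0 - m 1 by lra.
pose K := 1 / (2 * m 0 * m 1 * (m 0 + m 1)).
pose L := 1 / (2 * m 2 * (m 0 + m 1)).
have hK : 0 < K by rewrite /K divr_gt0 // !mulr_gt0 // addr_gt0.
have hL : 0 < L by rewrite /L divr_gt0 // !mulr_gt0 // addr_gt0.
pose k := Num.sqrt K; pose l := Num.sqrt L.
have hk : 0 < k by rewrite sqrtr_gt0.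
have hl : 0 < l by rewrite sqrtr_gt0.
have hk2 : k ^+ 2 = K by rewrite sqr_sqrtr // ltW.
have hl2 : l ^+ 2 = L by rewrite sqr_sqrtr // ltW.
pose a := fun i : 'I_3 => row3 _ (nth 0 [:: k * m 1; - (k * m 0); 0] i)
   (nth 0 [:: l * m 2; l * m 2; - (l * (m 0 + m 1))] i) 0.
pose n := row3 _ 0 0 s.
have hne01 : m 0 + m 1 != 0 by rewrite gt_eqF // addr_gt0.
have hne2 : 1 - m 0 - m 1 != 0 by rewrite -e2 gt_eqF.
have hIj : forall j, inertia_j m a j = (1 - m j) / 2.
  move=> j; case: (ord3P j) => [->|[->|->]]; rewrite /inertia_j.
  - transitivity (m 0 * (k ^+ 2 * m 1 ^+ 2 + l ^+ 2 * m 2 ^+ 2)).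
      by rewrite dotvE !mxE /=; ring.
    rewrite ?hk2 hl2 /K /L e2; field.
    by rewrite ?hne01 ?hne2 ?gt_eqF.
  - transitivity (m 1 * (k ^+ 2 * m 0 ^+ 2 + l ^+ 2 * m 2 ^+ 2)).
      by rewrite dotvE !mxE /=; ring.
    rewrite ?hk2 hl2 /K /L e2; field.
    by rewrite ?hne01 ?hne2 ?gt_eqF.
  - transitivity (m 2 * (l ^+ 2 * (m 0 + m 1) ^+ 2)).
      by rewrite dotvE !mxE /=; ring.
    rewrite ?hk2 hl2 /K /L e2; field.
    by rewrite ?hne01 ?hne2 ?gt_eqF.
exists a, n; split => //.
- split; [|split].
  + rewrite /is_mtriangle sum3; apply/rowP => c; rewrite !mxE.
    by case: (ord3P c) => [->|[->|->]] /=; ring.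
  + by rewrite dotvE !mxE /=; rewrite -hs2; ring.
  + by move=> i; rewrite dotvE !mxE /=; ring.
- rewrite /inertia sum3 !hIj; lra.
- exists (k * l * (m 2 * (m 0 + m 1))); split.
    by rewrite !mulr_gt0 // addr_gt0.
  by rewrite frame_det_E !mxE /=; ring.
Qed.
End Exist.

Local Close Scope classical_set_scope.

Theorem mainTheorem14 (R : realType) (m : 'I_3 -> R)
  (hpos : forall i, 0 < m i) (hsum : \sum_(i < 3) m i = 1) :
  (forall (a : 'I_3 -> 'rV[R]_3) (n : 'rV[R]_3),
     oriented_mtriangle m a n -> inertia m a = 1 ->
     (is_north_pole m a n <->
      (pos_oriented a n /\ forall j, inertia_j m a j = (1 - m j) / 2))) /\
  (forall (a : 'I_3 -> 'rV[R]_3) (n : 'rV[R]_3),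
     oriented_mtriangle m a n -> inertia m a = 1 ->
     (is_south_pole m a n <->
      (neg_oriented a n /\ forall j, inertia_j m a j = (1 - m j) / 2))) /\
  (exists (a : 'I_3 -> 'rV[R]_3) (n : 'rV[R]_3),
     oriented_mtriangle m a n /\ inertia m a = 1 /\ pos_oriented a n /\
     forall j, inertia_j m a j = (1 - m j) / 2) /\
  (exists (a : 'I_3 -> 'rV[R]_3) (n : 'rV[R]_3),
     oriented_mtriangle m a n /\ inertia m a = 1 /\ neg_oriented a n /\
     forall j, inertia_j m a j = (1 - m j) / 2).
Proof.
split; [|split; [|split]].
- move=> a n ho hI; split.
  + move=> [_ [_ [hor H]]].
    have [hnc hIj] := pole_nec R m hpos hsum a n ho hI H.
    by split => //; case: hor.
  + move=> [hp hIj]; split => //; split => //; split; first by left.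
    exact: pole_suff R m hpos hsum a n ho hI hIj.
- move=> a n ho hI; split.
  + move=> [_ [_ [hor H]]].
    have [hnc hIj] := pole_nec R m hpos hsum a n ho hI H.
    by split => //; case: hor.
  + move=> [hp hIj]; split => //; split => //; split; first by left.
    exact: pole_suff R m hpos hsum a n ho hI hIj.
- have [a [n [ho hI [c [hc hd]] hIj]]] := exists_pole R m hpos hsum 1 (expr1n _ _).
  exists a, n; split => //; split => //; split => //.
  split; first by move/(col_det0 R a n); rewrite hd mul1r => /eqP; rewrite gt_eqF.
  by rewrite hd mul1r.
- have [a [n [ho hI [c [hc hd]] hIj]]] := exists_pole R m hpos hsum (-1) (etrans (sqrrN _) (expr1n _ _)).
  exists a, n; split => //; split => //; split => //.
  split; first by move/(col_det0 R a n); rewrite hd mulN1r => /eqP; rewrite oppr_eq0 gt_eqF.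
  by rewrite hd mulN1r oppr_lt0.
Qed.
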